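(* Let $\mathbf{A}$ be an additive category equipped with an f.p. promonoidal structure $(T, \mathrm{Ass}, 1, \lambda, \varrho)$, let $\otimes := \widehat{T}$ and let $(\otimes, \widehat{\mathrm{Ass}}, 1, \widehat\lambda, \widehat\varrho)$ be the induced monoidal structure on $\mathcal{A}(\mathbf{A})$. Let $\mathrm{Br}_{a,b}: a\otimes b\xrightarrow{\sim} b\otimes a$ be an isomorphism natural in $a,b\in\mathbf{A}$ with extension $\widehat{\mathrm{Br}}$. Then $\widehat{\mathrm{Br}}$ defines a braiding for this monoidal structure, i.e. for all $A,B,C \in\mathcal{A}(\mathbf{A})$: (i) $\widehat\lambda_A \circ \widehat{\mathrm{Br}}_{A,1} = \widehat\varrho_A$; (ii) $(\widehat{\mathrm{Br}}_{C,A}\otimes\mathrm{id}_B)\circ\widehat{\mathrm{Ass}}_{C,A,B}\circ\widehat{\mathrm{Br}}_{A\otimes B, C} = \widehat{\mathrm{Ass}}_{A,C,B}\circ(\mathrm{id}_A\otimes\widehat{\mathrm{Br}}_{B,C})\circ\widehat{\mathrm{Ass}}^{-1}_{A,B,C}$; (iii) $(\mathrm{id}_B\otimes\widehat{\mathrm{Br}}_{C,A})\circ\widehat{\mathrm{Ass}}^{-1}_{B,C,A}\circ\widehat{\mathrm{Br}}_{A,B\otimes C} = \widehat{\mathrm{Ass}}^{-1}_{B,A,C}\circ(\widehat{\mathrm{Br}}_{A,B}\otimes\mathrm{id}_C)\circ\widehat{\mathrm{Ass}}_{A,B,C}$, if and only if the identities (i), (ii), (iii) hold for all $A,B,C \in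 \mathbf{A}$. Moreover, $\widehat{\mathrm{Br}}$ is symmetric (i.e. $\widehat{\mathrm{Br}}_{A,B} = \widehat{\mathrm{Br}}_{B,A}^{-1}$ for all $A,B\in\mathcal{A}(\mathbf{A})$) if and only if $\mathrm{Br}_{b,a}\circ\mathrm{Br}_{a,b} = \mathrm{id}_{a\otimes b}$ for all $a,b\in\mathbf{A}$.
   Context: The Freyd category $\mathcal{A}(\mathbf{A})$: objects are morphisms $\rho_a: r_a \to a$ of $\mathbf{A}$, written $(a \xleftarrow{\rho_a} r_a)$; morphisms $(a \xleftarrow{\rho_a} r_a) \to (b \xleftarrow{\rho_b} r_b)$ are morphisms $\alpha: a\to b$ of $\mathbf{A}$ with $\alpha\circ\rho_a = \rho_b\circ\omega$ for some $\omega$, modulo those of the form $\rho_b\circ\lambda$; it is additive with cokernels. Objects $a\in\mathbf{A}$ are regarded as $(a\leftarrow0)$ via the embedding $\mathrm{emb}$. For a multilinear (componentwise additive) $F: \prod_i\mathbf{A}_i\to\mathbf{B}$ into an additive category with cokernels, $\widehat F(A_1,\dots,A_n) = \operatorname{cok}\big(\bigoplus_j F(a_1,\dots,r_{a_j},\dots,a_n)\to F(a_1,\dots,a_n)\big)$ defines the right exact multilinear extension with $\widehat F\circ\mathrm{emb}\cong F$; restriction along $\mathrm{emb}$ is an equivalence between right exact multilinear functors on $\prod_i\mathcal{A}(\mathbf{A}_i)$ and multilinear functors on $\prod_i\mathbf{A}_i$, and the extension $\widehat\nu$ of a natural transformation $\nu$ between restrictions is the unique natural transformation between the right exact functors restricting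 to $\nu$. An f.p. promonoidal structure on $\mathbf{A}$ consists of a bilinear functor $T:\mathbf{A}\times\mathbf{A}\to\mathcal{A}(\mathbf{A})$, an isomorphism $\mathrm{Ass}_{a,b,c}: a\otimes(b\otimes c)\xrightarrow{\sim}(a\otimes b)\otimes c$ natural in $a,b,c\in\mathbf{A}$, an object $1\in\mathcal{A}(\mathbf{A})$, isomorphisms $\lambda_a: 1\otimes a\xrightarrow{\sim} a$, $\varrho_a: a\otimes 1\xrightarrow{\sim} a$ natural in $a\in\mathbf{A}$, such that the pentagon identity $\widehat{\mathrm{Ass}}_{a\otimes b,c,d}\circ\widehat{\mathrm{Ass}}_{a,b,c\otimes d} = (\widehat{\mathrm{Ass}}_{a,b,c}\otimes\mathrm{id}_d)\circ\widehat{\mathrm{Ass}}_{a,b\otimes c,d}\circ(\mathrm{id}_a\otimes\widehat{\mathrm{Ass}}_{b,c,d})$ and the triangle identity $(\widehat\varrho_a\otimes\mathrm{id}_b)\circ\widehat{\mathrm{Ass}}_{a,1,b} = \mathrm{id}_a\otimes\widehat\lambda_b$ hold for all $a,b,c,d\in\mathbf{A}$; then $(\otimes, \widehat{\mathrm{Ass}}, 1, \widehat\lambda,\widehat\varrho)$ is a monoidal structure on $\mathcal{A}(\mathbf{A})$. *)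

(* Defs.v *)
From HB Require Import structures.
From mathcomp Require Import all_boot all_algebra.
Set Implicit Arguments. Unset Strict Implicit. Unset Printing Implicit Defensive.
Import GRing.Theory.
Local Open Scope ring_scope.

Record addcat := AddCat {
  Ob : Type;
  Hom : Ob -> Ob -> zmodType;
  cmp : forall a b c : Ob, Hom b c -> Hom a b -> Hom a c;
  idm : forall a : Ob, Hom a a;
  compA : forall a b c d (h : Hom c d) (g : Hom b c) (f : Hom a b),
    cmp h (cmp g f) = cmp (cmp h g) f;
  comp1m : forall a b (f : Hom a b), cmp (idm b) f = f;
  compm1 : forall a b (f : Hom a b), cmp f (idm a) = f;
  compDl : forall a b c (g g' : Hom b c) (f : Hom a b),
    cmp (g + g') f = cmp g f + cmp g' f;
  compDr : forall a b c (g : Hom b c) (f f' : Hom a b),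
    cmp g (f + f') = cmp g f + cmp g f';
  zob : Ob;
  zob_init : forall a (f : Hom zob a), f = 0;
  zob_term : forall a (f : Hom a zob), f = 0;
  bp : Ob -> Ob -> Ob;
  bin1 : forall a b, Hom a (bp a b);
  bin2 : forall a b, Hom b (bp a b);
  bpr1 : forall a b, Hom (bp a b) a;
  bpr2 : forall a b, Hom (bp a b) b;
  bp_11 : forall a b, cmp (bpr1 a b) (bin1 a b) = idm a;
  bp_22 : forall a b, cmp (bpr2 a b) (bin2 a b) = idm b;
  bp_12 : forall a b, cmp (bpr1 a b) (bin2 a b) = 0;
  bp_21 : forall a b, cmp (bpr2 a b) (bin1 a b) = 0;
  bp_id : forall a b, cmp (bin1 a b) (bpr1 a b) + cmp (bin2 a b) (bpr2 a b)
                      = idm (bp a b)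
}.
Arguments Hom : clear implicits.
Arguments cmp {_ a b c} _ _.
Arguments idm {_}.
Arguments zob {_}.
Arguments bp {_}.
Arguments bpr1 {_ a b}.
Arguments bpr2 {_ a b}.

Section Freyd.
Variable A : addcat.

Definition copair (a b c : Ob A) (f : Hom A a c) (g : Hom A b c) : Hom A (bp a b) c :=
  cmp f bpr1 + cmp g bpr2.

(* Objects of the Freyd category A(A): morphisms rho : r -> a, written (a <- r). *)
Record fobj := FObj { fo : Ob A; fr : Ob A; frho : Hom A fr fo }.

(* A morphism X -> Y of A(A) is represented by  f : fo X -> fo Y  with      *)
(* f o rho_X = rho_Y o w for some w ...                                     *)
Definition fmor (X Y : fobj) (f : Hom A (fo X) (fo Y)) : Prop :=
  exists w : Hom A (fr X) (fr Y), cmp f (frho X) = cmp (frho Y) w.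
(* ... modulo those of the form rho_Y o l: equality in A(A)(X,Y).          *)
Definition feq (X Y : fobj) (f g : Hom A (fo X) (fo Y)) : Prop :=
  exists l : Hom A (fo X) (fr Y), f - g = cmp (frho Y) l.

Definition emb (a : Ob A) : fobj := FObj (0 : Hom A zob a).

End Freyd.
Arguments fmor {A}.
Arguments feq {A}.
Arguments emb {A}.

(* T : A x A -> A(A) bilinear; its action on morphisms is given by        *)
(* representatives Tm f g : fo (T a b) -> fo (T a' b').                   *)
Record promon_data (A : addcat) := PromonData {
  T : Ob A -> Ob A -> fobj A;
  Tm : forall a a' b b', Hom A a a' -> Hom A b b' -> Hom A (fo (T a b)) (fo (T a' b'));
  one : fobj A;
  Ass : forall a b c, Hom A (fo (T a (fo (T b c)))) (fo (T (fo (T a b)) c));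
  Assi : forall a b c, Hom A (fo (T (fo (T a b)) c)) (fo (T a (fo (T b c))));
  lam : forall a, Hom A (fo (T (fo one) a)) a;
  lami : forall a, Hom A a (fo (T (fo one) a));
  rho : forall a, Hom A (fo (T a (fo one))) a;
  rhoi : forall a, Hom A a (fo (T a (fo one)))
}.
Arguments Tm {A} _ {a a' b b'}.
Arguments T {A} _.
Arguments one {A} _.
Arguments Ass {A} _.
Arguments Assi {A} _.
Arguments lam {A} _.
Arguments lami {A} _.
Arguments rho {A} _.
Arguments rhoi {A} _.

Section Hat.
Variables (A : addcat) (P : promon_data A).
Local Notation T := (T P).
Local Notation Tm := (Tm P).

(* The right exact extension  X (x) Y := \hat T (X, Y)
   = cok( T(x, r_Y) (+) T(r_X, y) -> T(x, y) )  computed in A(A) with the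
   standard cokernel of A(A):  cok (phi : Z -> W) = (w <- r_W (+) z). *)
Definition hT (X Y : fobj A) : fobj A :=
  FObj (copair (frho (T (fo X) (fo Y)))
          (copair (Tm (idm (fo X)) (frho Y)) (Tm (frho X) (idm (fo Y))))).

Definition hTm (X X' Y Y' : fobj A) (f : Hom A (fo X) (fo X')) (g : Hom A (fo Y) (fo Y'))
  : Hom A (fo (hT X Y)) (fo (hT X' Y')) := Tm f g.
Arguments hTm : clear implicits.

(* extensions of the structure maps: the unique natural transformations of
   the right exact extensions restricting to the given ones; concretely they
   are represented by the same morphisms of A on underlying objects.     *)
Definition hAss (X Y Z : fobj A)
  : Hom A (fo (hT X (hT Y Z))) (fo (hT (hT X Y) Z)) := Ass P (fo X) (fo Y) (fo Z).
Definition hAssi (X Y Z : fobj A)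
  : Hom A (fo (hT (hT X Y) Z)) (fo (hT X (hT Y Z))) := Assi P (fo X) (fo Y) (fo Z).
Definition hlam (X : fobj A) : Hom A (fo (hT (one P) X)) (fo X) := lam P (fo X).
Definition hrho (X : fobj A) : Hom A (fo (hT X (one P))) (fo X) := rho P (fo X).

Definition is_fp_promonoidal : Prop :=
  [/\ (forall a a' b b' (f : Hom A a a') (g : Hom A b b'), fmor (T a b) (T a' b') (Tm f g)),
      (forall a b, feq (T a b) (T a b) (Tm (idm a) (idm b)) (idm _)),
      (forall a a' a'' b b' b'' (f : Hom A a a') (f' : Hom A a' a'')
              (g : Hom A b b') (g' : Hom A b' b''),
          feq (T a b) (T a'' b'') (Tm (cmp f' f) (cmp g' g)) (cmp (Tm f' g') (Tm f g))),
      (forall a a' b b' (f f' : Hom A a a') (g : Hom A b b'),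
          feq (T a b) (T a' b') (Tm (f + f') g) (Tm f g + Tm f' g)) &
      (forall a a' b b' (f : Hom A a a') (g g' : Hom A b b'),
          feq (T a b) (T a' b') (Tm f (g + g')) (Tm f g + Tm f g'))]
  /\
  [/\ (forall a b c, fmor (hT (emb a) (T b c)) (hT (T a b) (emb c)) (Ass P a b c)),
      (forall a b c, fmor (hT (T a b) (emb c)) (hT (emb a) (T b c)) (Assi P a b c)),
      (forall a b c, feq (hT (emb a) (T b c)) (hT (emb a) (T b c))
                         (cmp (Assi P a b c) (Ass P a b c)) (idm _)),
      (forall a b c, feq (hT (T a b) (emb c)) (hT (T a b) (emb c))
                         (cmp (Ass P a b c) (Assi P a b c)) (idm _)) &
      (forall a a' b b' c c' (f : Hom A a a') (g : Hom A b b') (h : Hom A c c'),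
          feq (hT (emb a) (T b c)) (hT (T a' b') (emb c'))
              (cmp (Ass P a' b' c') (Tm f (Tm g h)))
              (cmp (Tm (Tm f g) h) (Ass P a b c)))]
  /\
  [/\ (forall a, fmor (hT (one P) (emb a)) (emb a) (lam P a)),
      (forall a, fmor (emb a) (hT (one P) (emb a)) (lami P a)),
      (forall a, feq (hT (one P) (emb a)) (hT (one P) (emb a))
                     (cmp (lami P a) (lam P a)) (idm _)),
      (forall a, feq (emb a) (emb a) (cmp (lam P a) (lami P a)) (idm _)) &
      (forall a a' (f : Hom A a a'),
          feq (hT (one P) (emb a)) (emb a')
              (cmp (lam P a') (Tm (idm (fo (one P))) f)) (cmp f (lam P a)))]
  /\
  [/\ (forall a, fmor (hT (emb a) (one P)) (emb a) (rho P a)),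
      (forall a, fmor (emb a) (hT (emb a) (one P)) (rhoi P a)),
      (forall a, feq (hT (emb a) (one P)) (hT (emb a) (one P))
                     (cmp (rhoi P a) (rho P a)) (idm _)),
      (forall a, feq (emb a) (emb a) (cmp (rho P a) (rhoi P a)) (idm _)) &
      (forall a a' (f : Hom A a a'),
          feq (hT (emb a) (one P)) (emb a')
              (cmp (rho P a') (Tm f (idm (fo (one P))))) (cmp f (rho P a)))]
  /\
  (forall a b c d,
     let A' := emb a in let B := emb b in let C := emb c in let D := emb d in
     feq (hT A' (hT B (hT C D))) (hT (hT (hT A' B) C) D)
       (cmp (hAss (hT A' B) C D) (hAss A' B (hT C D)))
       (cmp (hTm (hT A' (hT B C)) (hT (hT A' B) C) D D (hAss A' B C) (idm (fo D)))
          (cmp (hAss A' (hT B C) D)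
             (hTm A' A' (hT B (hT C D)) (hT (hT B C) D) (idm (fo A')) (hAss B C D)))))
  /\
  (forall a b,
     let A' := emb a in let B := emb b in
     feq (hT A' (hT (one P) B)) (hT A' B)
       (cmp (hTm (hT A' (one P)) A' B B (hrho A') (idm (fo B))) (hAss A' (one P) B))
       (hTm A' A' (hT (one P) B) B (idm (fo A')) (hlam B))).

Definition is_nat_iso_braid
  (Br : forall a b, Hom A (fo (T a b)) (fo (T b a)))
  (Bri : forall a b, Hom A (fo (T b a)) (fo (T a b))) : Prop :=
  [/\ (forall a b, fmor (hT (emb a) (emb b)) (hT (emb b) (emb a)) (Br a b)),
      (forall a b, fmor (hT (emb b) (emb a)) (hT (emb a) (emb b)) (Bri a b)),
      (forall a b, feq (hT (emb a) (emb b)) (hT (emb a) (emb b))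
                       (cmp (Bri a b) (Br a b)) (idm _)),
      (forall a b, feq (hT (emb b) (emb a)) (hT (emb b) (emb a))
                       (cmp (Br a b) (Bri a b)) (idm _)) &
      (forall a a' b b' (f : Hom A a a') (g : Hom A b b'),
          feq (hT (emb a) (emb b)) (hT (emb b') (emb a'))
              (cmp (Br a' b') (Tm f g)) (cmp (Tm g f) (Br a b)))].

Section Braid.
Variables (Br : forall a b, Hom A (fo (T a b)) (fo (T b a)))
          (Bri : forall a b, Hom A (fo (T b a)) (fo (T a b))).

Definition hBr (X Y : fobj A) : Hom A (fo (hT X Y)) (fo (hT Y X)) := Br (fo X) (fo Y).
Definition hBri (X Y : fobj A) : Hom A (fo (hT Y X)) (fo (hT X Y)) := Bri (fo X) (fo Y).

Definition braid_eqs (X Y Z : fobj A) : Prop :=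
  [/\
      feq (hT X (one P)) X (cmp (hlam X) (hBr X (one P))) (hrho X),
      feq (hT (hT X Y) Z) (hT (hT X Z) Y)
        (cmp (hTm (hT Z X) (hT X Z) Y Y (hBr Z X) (idm (fo Y)))
           (cmp (hAss Z X Y) (hBr (hT X Y) Z)))
        (cmp (hAss X Z Y)
           (cmp (hTm X X (hT Y Z) (hT Z Y) (idm (fo X)) (hBr Y Z)) (hAssi X Y Z))) &
      feq (hT X (hT Y Z)) (hT Y (hT X Z))
        (cmp (hTm Y Y (hT Z X) (hT X Z) (idm (fo Y)) (hBr Z X))
           (cmp (hAssi Y Z X) (hBr X (hT Y Z))))
        (cmp (hAssi Y X Z)
           (cmp (hTm (hT X Y) (hT Y X) Z Z (hBr X Y) (idm (fo Z))) (hAss X Y Z)))].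

End Braid.
End Hat.

(* Main.v *)
Require Import Defs.
From mathcomp Require Import all_boot ssralg.
Import GRing.Theory.
Local Open Scope ring_scope.
Set Implicit Arguments. Unset Strict Implicit.

Lemma cmp0r (A : addcat) (a b c : Ob A) (g : Hom A b c) :
  cmp g (0 : Hom A a b) = 0.
Proof.
have h := compDr g (0 : Hom A a b) 0.
rewrite addr0 in h.
by apply: (addrI (cmp g (0 : Hom A a b))); rewrite addr0 -h.
Qed.

Lemma cmpNr (A : addcat) (a b c : Ob A) (g : Hom A b c) (f : Hom A a b) :
  cmp g (- f) = - cmp g f.
Proof.
apply/eqP; rewrite -subr_eq0 opprK -compDr addNr cmp0r //.
Qed.

Lemma cmp0l (A : addcat) (a b c : Ob A) (f : Hom A a b) :
  cmp (0 : Hom A b c) f = 0.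
Proof.
have h := compDl (0 : Hom A b c) 0 f.
rewrite addr0 in h.
by apply: (addrI (cmp (0 : Hom A b c) f)); rewrite addr0 -h.
Qed.

Lemma cmpNl (A : addcat) (a b c : Ob A) (g : Hom A b c) (f : Hom A a b) :
  cmp (- g) f = - cmp g f.
Proof.
apply/eqP; rewrite -subr_eq0 opprK -compDl addNr cmp0l //.
Qed.

Lemma cmpBr (A : addcat) (a b c : Ob A) (g : Hom A b c) (f f' : Hom A a b) :
  cmp g (f - f') = cmp g f - cmp g f'.
Proof. by rewrite compDr cmpNr. Qed.

Lemma cmpBl (A : addcat) (a b c : Ob A) (g g' : Hom A b c) (f : Hom A a b) :
  cmp (g - g') f = cmp g f - cmp g' f.
Proof. by rewrite compDl cmpNl. Qed.

Definition fact (A : addcat) (W : fobj A) (r : Ob A) (h : Hom A r (fo W)) : Prop :=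
  exists m : Hom A r (fr W), h = cmp (frho W) m.
Arguments fact {A} W {r} h.

Lemma fact0 (A : addcat) (W : fobj A) (r : Ob A) : fact W (0 : Hom A r (fo W)).
Proof. by exists 0; rewrite cmp0r. Qed.

Lemma factD (A : addcat) (W : fobj A) r (h1 h2 : Hom A r (fo W)) :
  fact W h1 -> fact W h2 -> fact W (h1 + h2).
Proof. by move=> [m1 ->] [m2 ->]; exists (m1 + m2); rewrite compDr. Qed.

Lemma factM (A : addcat) (W : fobj A) r r' (h : Hom A r (fo W)) (n : Hom A r' r) :
  fact W h -> fact W (cmp h n).
Proof. by move=> [m ->]; exists (cmp m n); rewrite Defs.compA. Qed.

Lemma fact_copair (A : addcat) (W : fobj A) r1 r2 (h1 : Hom A r1 (fo W))
  (h2 : Hom A r2 (fo W)) : fact W h1 -> fact W h2 -> fact W (copair h1 h2).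
Proof. by move=> f1 f2; apply: factD; apply: factM. Qed.

Lemma fact_rho (A : addcat) (W : fobj A) r (m : Hom A r (fr W)) :
  fact W (cmp (frho W) m).
Proof. by exists m. Qed.

Lemma copair_in1 (A : addcat) (a b c : Ob A) (f : Hom A a c) (g : Hom A b c) :
  cmp (copair f g) (Defs.bin1 a b) = f.
Proof.
rewrite /copair compDl -!Defs.compA bp_11 bp_21 cmp0r addr0 compm1 //.
Qed.

Lemma copair_in2 (A : addcat) (a b c : Ob A) (f : Hom A a c) (g : Hom A b c) :
  cmp (copair f g) (Defs.bin2 a b) = g.
Proof.
rewrite /copair compDl -!Defs.compA bp_12 bp_22 cmp0r add0r compm1 //.
Qed.

Lemma feq_fact (A : addcat) (W : fobj A) r (h : Hom A r (fo W)) (X : fobj A)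
  (f g : Hom A (fo X) (fo W)) : fact W h -> feq X (FObj h) f g -> feq X W f g.
Proof. by move=> [m E] [l /= L]; exists (cmp m l); rewrite L E Defs.compA. Qed.

Lemma fact_feq (A : addcat) (X W : fobj A) (h h' : Hom A (fo X) (fo W)) :
  feq X W h h' -> fact W h' -> fact W h.
Proof.
move=> [l E] F; have -> : h = (h - h') + h' by rewrite subrK.
by rewrite E; apply: factD => //; exists l.
Qed.

Definition functorial (A : addcat) (P : promon_data A) :=
  forall a a' a'' b b' b'' (f : Hom A a a') (f' : Hom A a' a'')
              (g : Hom A b b') (g' : Hom A b' b''),
          feq (T P a b) (T P a'' b'') (Tm P (cmp f' f) (cmp g' g)) (cmp (Tm P f' g') (Tm P f g)).

Lemma fact_hT (A : addcat) (P : promon_data A) (HF : functorial P)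
  (U V : fobj A) r1 r2 (h1 : Hom A r1 (fo U)) (h2 : Hom A r2 (fo V)) :
  fact U h1 -> fact V h2 -> fact (hT P U V) (frho (hT P (FObj h1) (FObj h2))).
Proof.
move=> [m1 E1] [m2 E2] /=.
have F1 : fact (hT P U V) (frho (T P (fo U) (fo V))).
  by rewrite -(copair_in1 (frho (T P (fo U) (fo V))) (copair (Tm P (idm (fo U)) (frho V))
      (Tm P (frho U) (idm (fo V))))); apply: fact_rho.
apply: fact_copair => //; apply: fact_copair.
- have := HF _ _ _ _ _ _ (idm (fo U)) (idm (fo U)) m2 (frho V).
  rewrite comp1m -E2 => -[l L].
  match goal with |- fact _ ?h => rewrite -(subrK (cmp (Tm P (idm (fo U)) (frho V)) (Tm P (idm (fo U)) m2)) h) end.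
  rewrite L; apply: factD; first by apply: factM.
  apply: factM.
  rewrite -(copair_in1 (Tm P (idm (fo U)) (frho V)) (Tm P (frho U) (idm (fo V)))).
  rewrite -(copair_in2 (frho (T P (fo U) (fo V))) (copair (Tm P (idm (fo U)) (frho V))
      (Tm P (frho U) (idm (fo V))))) -Defs.compA.
  by apply: fact_rho.
- have := HF _ _ _ _ _ _ m1 (frho U) (idm (fo V)) (idm (fo V)).
  rewrite comp1m -E1 => -[l L].
  match goal with |- fact _ ?h => rewrite -(subrK (cmp (Tm P (frho U) (idm (fo V))) (Tm P m1 (idm (fo V)))) h) end.
  rewrite L; apply: factD; first by apply: factM.
  apply: factM.
  rewrite -(copair_in2 (Tm P (idm (fo U)) (frho V)) (Tm P (frho U) (idm (fo V)))).
  rewrite -(copair_in2 (frho (T P (fo U) (fo V))) (copair (Tm P (idm (fo U)) (frho V))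
      (Tm P (frho U) (idm (fo V))))) -Defs.compA.
  by apply: fact_rho.
Qed.

Theorem lemma3p19 (A : addcat) (P : promon_data A)
  (HP : is_fp_promonoidal P)
  (Br : forall a b, Hom A (fo (T P a b)) (fo (T P b a)))
  (Bri : forall a b, Hom A (fo (T P b a)) (fo (T P a b)))
  (HBr : is_nat_iso_braid Br Bri) :
  ((forall X Y Z : fobj A, braid_eqs Br X Y Z) <->
   (forall a b c : Ob A, braid_eqs Br (emb a) (emb b) (emb c)))
  /\
  ((forall X Y : fobj A,
      feq (hT P X Y) (hT P Y X) (hBr Br X Y) (hBri Bri Y X)) <->
   (forall a b : Ob A,
      feq (hT P (emb a) (emb b)) (hT P (emb a) (emb b))
          (cmp (Br b a) (Br a b)) (idm _))).
Proof.
have HF : functorial P by case: HP => -[_ _ HF _ _] _.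
split.
  split; first by move=> H a b c; exact: H.
  move=> H X Y Z; have [h1 h2 h3] := H (fo X) (fo Y) (fo Z); split.
  - exact: (feq_fact (fact0 X zob) h1).
  - have F := fact_hT HF (fact_hT HF (fact0 X zob) (fact0 Z zob)) (fact0 Y zob).
    exact (feq_fact F h2).
  - have F := fact_hT HF (fact0 Y zob) (fact_hT HF (fact0 X zob) (fact0 Z zob)).
    exact: (feq_fact F h3).
have [Bm Bim BiB BBi _] := HBr.
split.
- move=> H a b; have [l L] := H (emb a) (emb b).
  rewrite /hBr /hBri /= in L.
  have [l2 L2] := BBi b a.
  have [w W] := Bm b a.
  exists (cmp w l + l2).
  have E : Br a b = cmp (frho (hT P (emb b) (emb a))) l + Bri b a by rewrite -L subrK.
  rewrite E (compDr (Br b a)) Defs.compA W -Defs.compA -addrA L2 compDr //.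
- move=> H X Y.
  have F := fact_hT HF (fact0 Y zob) (fact0 X zob).
  apply: (feq_fact F).
  have [l1 L1] := H (fo X) (fo Y).
  have [l2 L2] := BiB (fo Y) (fo X).
  have [w W] := Bim (fo Y) (fo X).
  exists (- cmp l2 (Br (fo X) (fo Y)) + cmp w l1).
  rewrite /= /hBr /hBri.
  rewrite compDr cmpNr !Defs.compA -L2 -W -Defs.compA -L1.
  rewrite cmpBl cmpBr comp1m compm1 !Defs.compA.
  by rewrite opprB addrA subrK.
Qed.
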